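(* Let $V$ be a complex vector space of dimension $n$ and let $K\subseteq\bigwedge^2V$ be a subspace of dimension $2n-3$ such that $\mathbf{P}(K^\perp)\cap\mathrm{Gr}_2(V^\vee)\neq\emptyset$. Then $\dim W_q(V,K)\geq q+1$ for all $q\geq 0$.
   Context: $K^\perp\subseteq\bigwedge^2V^\vee$ is the annihilator of $K$, and $\mathrm{Gr}_2(V^\vee)\subseteq\mathbf{P}(\bigwedge^2V^\vee)$ is the Plücker embedding. $W_q(V,K)$ is the middle cohomology of $K\otimes\operatorname{Sym}^qV\to V\otimes\operatorname{Sym}^{q+1}V\to\operatorname{Sym}^{q+2}V$, with the first map the restriction of the Koszul differential $v_1\wedge v_2\otimes f\mapsto v_2\otimes v_1f-v_1\otimes v_2f$ and the second multiplication. *)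

(* Defs.v *)
From HB Require Import structures.
From mathcomp Require Import all_boot all_order all_algebra.
From mathcomp Require Import reals Rstruct complex.
From Stdlib Require Reals.

Set Implicit Arguments.
Unset Strict Implicit.
Unset Printing Implicit Defensive.

Import Order.TTheory GRing.Theory Num.Theory.
Local Open Scope ring_scope.

Definition CC : fieldType := (Rdefinitions.R)[i].

(* V = C^n with standard basis e_0, ..., e_{n-1}; V^vee has the dual basis. *)
Definition Vsp (n : nat) := {ffun 'I_n -> CC^o}.

(* Index set of the basis e_i /\ e_j (i < j) of  /\^2 V. *)
Definition pairs (n : nat) := {p : 'I_n * 'I_n | (p.1 < p.2)%N}.

(* /\^2 V, in coordinates w.r.t. the basis e_i /\ e_j, i < j.
   The same type is used for /\^2 V^vee in the dual basis
   e_i^* /\ e_j^*, i < j. *)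
Definition Wedge2 (n : nat) := {ffun pairs n -> CC^o}.

(* Monomials of degree q in the n variables x_0..x_{n-1}
   (x_i = e_i seen in Sym^1 V), given by their exponent vectors. *)
Definition mono (n q : nat) :=
  {m : {ffun 'I_n -> 'I_q.+1} | (\sum_(i < n) (m i : nat))%N == q}.

Definition Sym (n q : nat) := {ffun mono n q -> CC^o}.

(* Multiplication by the variable x_i : Sym^q V -> Sym^(q+1) V :
   the coefficient of m in x_i f is the coefficient in f of the monomial
   m' with m' + x_i = m (if any). *)
Definition xmul (n q : nat) (i : 'I_n) (f : Sym n q) : Sym n q.+1 :=
  [ffun m : mono n q.+1 =>
     \sum_(m' : mono n q |
            [forall j : 'I_n, ((val m' j : nat) + (j == i) == val m j)%N])
       f m'].

(* Pure tensor v (x) g  in  V (x) Sym^p V = {ffun 'I_n -> Sym n p}. *)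
Definition tensV (n p : nat) (v : Vsp n) (g : Sym n p) : {ffun 'I_n -> Sym n p} :=
  [ffun l => v l *: g].

Definition evec (n : nat) (j : 'I_n) : Vsp n := [ffun l => (l == j)%:R].

(* Pure tensor k (x) f  in  /\^2 V (x) Sym^q V = {ffun pairs n -> Sym n q}. *)
Definition tens2 (n q : nat) (k : Wedge2 n) (f : Sym n q) : {ffun pairs n -> Sym n q} :=
  [ffun p => k p *: f].

(* The Koszul differential  /\^2 V (x) Sym^q V -> V (x) Sym^(q+1) V,
   v1 /\ v2 (x) f  |->  v2 (x) v1 f - v1 (x) v2 f,
   written on the basis e_i /\ e_j (x) f (i < j). *)
Definition koszul (n q : nat) (t : {ffun pairs n -> Sym n q})
  : {ffun 'I_n -> Sym n q.+1} :=
  \sum_(p : pairs n)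
     (tensV (evec (val p).2) (xmul (val p).1 (t p))
      - tensV (evec (val p).1) (xmul (val p).2 (t p))).

Definition multmap (n q : nat) (g : {ffun 'I_n -> Sym n q.+1}) : Sym n q.+2 :=
  \sum_(l : 'I_n) xmul l (g l).

Definition tensK (n q : nat) (K : {vspace Wedge2 n})
  : {vspace {ffun pairs n -> Sym n q}} :=
  <<[seq tens2 k f | k <- vbasis K, f <- vbasis (fullv : {vspace Sym n q})]>>%VS.

(* Middle cohomology W_q(V,K) of
   K (x) Sym^q V -> V (x) Sym^(q+1) V -> Sym^(q+2) V,
   its dimension being dim ker - dim im (the image lies in the kernel). *)
Definition Wker (n q : nat) : {vspace {ffun 'I_n -> Sym n q.+1}} :=
  lker (linfun (@multmap n q)).

Definition Wim (n q : nat) (K : {vspace Wedge2 n})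
  : {vspace {ffun 'I_n -> Sym n q.+1}} :=
  (linfun (@koszul n q) @: tensK q K)%VS.

Definition dimW (n q : nat) (K : {vspace Wedge2 n}) : nat :=
  (\dim (Wker n q) - \dim (Wim q K))%N.

Definition wedge2 (n : nat) (phi psi : Vsp n) : Wedge2 n :=
  [ffun p : pairs n => phi (val p).1 * psi (val p).2 - phi (val p).2 * psi (val p).1].

Definition pairing (n : nat) (w k : Wedge2 n) : CC :=
  \sum_(p : pairs n) w p * k p.

Definition in_perp (n : nat) (K : {vspace Wedge2 n}) (w : Wedge2 n) : Prop :=
  forall k, k \in K -> pairing w k = 0.

(* [w] lies on Gr_2(V^vee) in its Pluecker embedding: w is a nonzero
   decomposable 2-vector. *)
Definition on_Gr (n : nat) (w : Wedge2 n) : Prop :=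
  w != 0 /\ exists phi psi : Vsp n, w = wedge2 phi psi.

Definition perp_meets_Gr (n : nat) (K : {vspace Wedge2 n}) : Prop :=
  exists w : Wedge2 n, in_perp K w /\ on_Gr w.

(* Main.v *)
Require Import Defs.
From HB Require Import structures.
From mathcomp Require Import all_boot all_order all_algebra.
From mathcomp Require Import ring zify.
From mathcomp Require Import reals Rstruct complex.
Set Implicit Arguments.
Unset Strict Implicit.
Unset Printing Implicit Defensive.
Import Order.TTheory GRing.Theory Num.Theory.
Local Open Scope ring_scope.

Definition shiftf (n q : nat) (i : 'I_n) (m : mono n q) : {ffun 'I_n -> 'I_q.+2} :=
  [ffun j => inord ((val m j : nat) + (j == i))%N].

Lemma shiftfE n q i (m : mono n q) j : (shiftf i m j : nat) = ((val m j : nat) + (j == i))%N.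
Proof.
rewrite ffunE inordK //; have := ltn_ord (val m j).
by case: (j == i); rewrite ?addn0 ?addn1 // => /leqW.
Qed.

Lemma shift_proof n q i (m : mono n q) : (\sum_(j < n) (shiftf i m j : nat) == q.+1)%N.
Proof.
under eq_bigr do rewrite shiftfE.
rewrite big_split /= (eqP (valP m)) -addn1 eqn_add2l.
by rewrite (bigD1 i) //= eqxx big1 // => j /negbTE ->.
Qed.

Definition shift n q (i : 'I_n) (m : mono n q) : mono n q.+1 :=
  exist _ (shiftf i m) (shift_proof i m).

Lemma shiftE n q i (m : mono n q) j : (val (shift i m) j : nat) = ((val m j : nat) + (j == i))%N.
Proof. exact: shiftfE. Qed.

Lemma relE n q (i : 'I_n) (m' : mono n q) (m : mono n q.+1) :
  [forall j : 'I_n, ((val m' j : nat) + (j == i) == val m j)%N] = (m == shift i m').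
Proof.
apply/forallP/eqP => [H|->]; last by move=> j; rewrite /= shiftfE.
apply: val_inj; apply/ffunP => j; apply: val_inj.
by rewrite /= shiftfE; apply/esym/eqP/H.
Qed.

Lemma xmulE n q i (f : Sym n q) m :
  xmul i f m = \sum_(m' | m == shift i m') f m'.
Proof. by rewrite ffunE; apply: eq_bigl => m'; rewrite relE. Qed.

Lemma shift_comm n q (i j : 'I_n) (m : mono n q) :
  shift j (shift i m) = shift i (shift j m).
Proof.
apply: val_inj; apply/ffunP => k; apply: val_inj.
by rewrite /= !shiftfE addnAC.
Qed.

Lemma xmul2E n q (i j : 'I_n) (f : Sym n q) m :
  xmul j (xmul i f) m = \sum_m'' (if m == shift j (shift i m'') then f m'' else 0).
Proof.
rewrite xmulE; under eq_bigr do rewrite xmulE.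
rewrite (exchange_big_dep xpredT) //; apply: eq_bigr => m'' _.
rewrite (eq_bigl (fun i0 => (i0 == shift i m'') && (m == shift j (shift i m'')))); last first.
  by move=> i0; rewrite andbC; case: (i0 =P shift i m'') => [->|].
rewrite big_mkcond (bigD1 (shift i m'')) // big1 ?addr0.
  by rewrite eqxx /= addr0.
by move=> x /negbTE ->.
Qed.

Lemma xmulC n q (i j : 'I_n) (f : Sym n q) :
  xmul j (xmul i f) = xmul i (xmul j f).
Proof. by apply/ffunP => m; rewrite !xmul2E; under eq_bigr do rewrite shift_comm. Qed.

Lemma xmulZ n q i (c : CC) (f : Sym n q) : xmul i (c *: f) = c *: xmul i f.
Proof.
apply/ffunP => m.
rewrite xmulE [RHS]ffunE xmulE scaler_sumr; apply: eq_bigr => m' _; by rewrite ffunE.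
Qed.
Lemma xmulD n q i (f g : Sym n q) : xmul i (f + g) = xmul i f + xmul i g.
Proof.
apply/ffunP => m.
rewrite xmulE [RHS]ffunE !xmulE -big_split; apply: eq_bigr => m' _; by rewrite ffunE.
Qed.
Lemma xmul_is_semilinear n q (i : 'I_n) : semilinear (@xmul n q i).
Proof. by split=> [c f|f g]; [exact: xmulZ | exact: xmulD]. Qed.

HB.instance Definition _ n q (i : 'I_n) :=
  GRing.isSemilinear.Build CC (Sym n q) (Sym n q.+1) _ (@xmul n q i) (@xmul_is_semilinear n q i).

Definition mon n q (m : mono n q) (p : Vsp n) : CC := \prod_j p j ^+ (val m j).

Lemma mon_shift n q i (m : mono n q) p : mon (shift i m) p = p i * mon m p.
Proof.
rewrite /mon; under eq_bigr do rewrite shiftE exprD.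
rewrite big_split mulrC; congr (_ * _).
by rewrite (bigD1 i) // eqxx expr1 big1 ?Monoid.mulm1 // => j /negbTE ->.
Qed.

Definition ev n q (p : Vsp n) (f : Sym n q) : CC := \sum_m f m * mon m p.

Lemma evZ n q p (c : CC) (f : Sym n q) : ev p (c *: f) = c * ev p f.
Proof.
rewrite /ev mulr_sumr; apply: eq_bigr => m _; rewrite ffunE; exact: (esym (mulrA _ _ _)).
Qed.
Lemma evD n q p (f g : Sym n q) : ev p (f + g) = ev p f + ev p g.
Proof.
rewrite /ev -big_split; apply: eq_bigr => m _; rewrite ffunE; exact: (@mulrDl CC _ _ _).
Qed.
Lemma ev_is_semilinear n q (p : Vsp n) : semilinear (@ev n q p : Sym n q -> CC^o).
Proof. by split=> [c f|f g]; [exact: evZ | exact: evD]. Qed.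

HB.instance Definition _ n q (p : Vsp n) :=
  GRing.isSemilinear.Build CC (Sym n q) CC^o _ (@ev n q p) (@ev_is_semilinear n q p).

Lemma ev_xmul n q i (f : Sym n q) p : ev p (xmul i f) = p i * ev p f.
Proof.
rewrite /ev; under eq_bigr do rewrite xmulE mulr_suml.
rewrite (exchange_big_dep xpredT) // mulr_sumr; apply: eq_bigr => m' _.
rewrite (big_pred1 (shift i m')) ?mon_shift; first exact: mulrCA.
by move=> m; rewrite /= eq_sym.
Qed.

Lemma xmulN n q i (f : Sym n q) : xmul i (- f) = - xmul i f.
Proof. by rewrite -scaleN1r xmulZ scaleN1r. Qed.
Lemma xmulB n q i (f g : Sym n q) : xmul i (f - g) = xmul i f - xmul i g.
Proof. by rewrite xmulD xmulN. Qed.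
Lemma xmul0 n q i : xmul i (0 : Sym n q) = 0.
Proof. by rewrite -(scale0r (0 : Sym n q)) xmulZ scale0r. Qed.
Lemma xmul_sum n q i (I : finType) (F : I -> Sym n q) :
  xmul i (\sum_k F k) = \sum_k xmul i (F k).
Proof.
exact: (raddf_sum (xmul i)).
Qed.

Lemma evN n q p (f : Sym n q) : ev p (- f) = - ev p f.
Proof. by rewrite -scaleN1r evZ mulN1r. Qed.
Lemma evB n q p (f g : Sym n q) : ev p (f - g) = ev p f - ev p g.
Proof. by rewrite evD evN. Qed.
Lemma ev0 n q p : ev p (0 : Sym n q) = 0.
Proof. by rewrite -(scale0r (0 : Sym n q)) evZ mul0r. Qed.
Lemma ev_sum n q p (I : finType) (F : I -> Sym n q) :
  ev p (\sum_k F k) = \sum_k ev p (F k).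
Proof.
exact: (raddf_sum (@ev n q p)).
Qed.

Lemma exch (I J : finType) (V : nmodType) (F : I -> J -> V) :
  \sum_i \sum_j F i j = \sum_j \sum_i F i j.
Proof. exact: exchange_big. Qed.

Lemma sum_delta (I : finType) (V : lmodType CC) (G : I -> V) (j : I) :
  \sum_l ((l == j)%:R *: G l) = G j.
Proof.
rewrite (bigD1 j) // eqxx scale1r big1 ?Monoid.mulm1 // => l /negbTE ->.
by rewrite scale0r.
Qed.

Lemma sum_deltaC (I : finType) (G : I -> CC) (j : I) :
  \sum_l (G l * (l == j)%:R) = G j.
Proof.
rewrite (bigD1 j) // eqxx mulr1 big1 ?Monoid.mulm1 // => l /negbTE ->.
by rewrite mulr0.
Qed.

Lemma tensVZ n p (v : Vsp n) (c : CC) (g : Sym n p) : tensV v (c *: g) = c *: tensV v g.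
Proof. by apply/ffunP => l; rewrite !ffunE scalerA mulrC -scalerA. Qed.

Lemma tensVD n p (v : Vsp n) (g h : Sym n p) : tensV v (g + h) = tensV v g + tensV v h.
Proof. by apply/ffunP => l; rewrite !ffunE scalerDr. Qed.

Lemma koszul_is_semilinear n q : semilinear (@koszul n q).
Proof.
split=> [c t|t u]; rewrite /koszul.
  rewrite scaler_sumr; apply: eq_bigr => p _.
  by rewrite ffunE !linearZ /= !tensVZ scalerBr.
rewrite -big_split; apply: eq_bigr => p _.
by rewrite ffunE !linearD /= !tensVD addrACA opprD.
Qed.

HB.instance Definition _ n q :=
  GRing.isSemilinear.Build CC _ _ _ (@koszul n q) (@koszul_is_semilinear n q).

Lemma multmap_is_semilinear n q : semilinear (@multmap n q).
Proof.
split=> [c t|t u]; rewrite /multmap.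
  rewrite scaler_sumr; apply: eq_bigr => l _.
  by rewrite ffunE linearZ.
rewrite -big_split; apply: eq_bigr => l _.
by rewrite ffunE linearD.
Qed.

HB.instance Definition _ n q :=
  GRing.isSemilinear.Build CC _ _ _ (@multmap n q) (@multmap_is_semilinear n q).

Lemma koszul_coord n q (t : {ffun pairs n -> Sym n q}) l :
  koszul t l = \sum_p ((l == (val p).2)%:R *: xmul (val p).1 (t p)
                       - (l == (val p).1)%:R *: xmul (val p).2 (t p)).
Proof.
rewrite /koszul sum_ffunE; apply: eq_bigr => p _.
by rewrite !ffunE.
Qed.

Lemma multmap_koszul n q (t : {ffun pairs n -> Sym n q}) : multmap (koszul t) = 0.
Proof.
rewrite /multmap.
under eq_bigr do rewrite koszul_coord xmul_sum.
rewrite exch; apply: big1 => p _.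
under eq_bigr do rewrite xmulB !xmulZ.
rewrite sumrB !sum_delta xmulC; exact: subrr.
Qed.

Definition pt n (phi psi : Vsp n) (b : nat) : Vsp n := [ffun l => b%:R * phi l + psi l].

Definition Lmap n q (phi psi : Vsp n) (z : {ffun 'I_n -> Sym n q.+1}) : {ffun 'I_q.+1 -> CC^o} :=
  [ffun b : 'I_q.+1 => \sum_l phi l * ev (pt phi psi b) (z l)].

Lemma Lmap_is_semilinear n q (phi psi : Vsp n) : semilinear (@Lmap n q phi psi).
Proof.
split=> [c z|z u]; apply/ffunP => b.
  rewrite [RHS]ffunE !ffunE scaler_sumr; apply: eq_bigr => l _.
  rewrite ffunE evZ. exact: mulrCA.
rewrite [RHS]ffunE !ffunE -big_split; apply: eq_bigr => l _.
by rewrite ffunE evD mulrDr.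
Qed.

HB.instance Definition _ n q (phi psi : Vsp n) :=
  GRing.isSemilinear.Build CC _ _ _ (@Lmap n q phi psi) (@Lmap_is_semilinear n q phi psi).

Lemma sum_delta2 (I : finType) (G : I -> CC) (j : I) (X : CC) :
  \sum_l G l * ((l == j)%:R * X) = G j * X.
Proof.
rewrite (bigD1 j) // eqxx mul1r big1 ?Monoid.mulm1 // => l /negbTE ->.
by rewrite mul0r mulr0.
Qed.

Lemma L_koszul n q (phi psi : Vsp n) (t : {ffun pairs n -> Sym n q}) b :
  Lmap phi psi (koszul t) b = - \sum_p wedge2 phi psi p * ev (pt phi psi b) (t p).
Proof.
rewrite ffunE.
under eq_bigr do rewrite koszul_coord ev_sum mulr_sumr.
rewrite exch -sumrN; apply: eq_bigr => p _.
under eq_bigr do rewrite evB !evZ !ev_xmul mulrBr.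
rewrite sumrB !sum_delta2 !ffunE.
ring.
Qed.

Definition lin2 n k (i j : 'I_n) (al be : CC) (f : Sym n k) : Sym n k.+1 :=
  al *: xmul i f - be *: xmul j f.

Lemma ev_lin2 n k (i j : 'I_n) al be (f : Sym n k) p :
  ev p (lin2 i j al be f) = (al * p i - be * p j) * ev p f.
Proof. by rewrite /lin2 evB !evZ !ev_xmul; ring. Qed.

Lemma m0_proof n : (\sum_(i < n) (([ffun _ => ord0] : {ffun 'I_n -> 'I_1}) i : nat) == 0)%N.
Proof. by rewrite big1 // => i _; rewrite ffunE. Qed.

Definition m0 n : mono n 0 := exist (fun m : {ffun 'I_n -> 'I_1} => (\sum_(i < n) (m i : nat) == 0)%N) [ffun _ => ord0] (m0_proof n).

Definition one n : Sym n 0 := [ffun m => (m == m0 n)%:R].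

Lemma ev_one n p : ev p (one n) = 1.
Proof.
rewrite /ev (bigD1 (m0 n)) // big1 ?Monoid.mulm1.
  rewrite ffunE eqxx mul1r /mon big1 // => l _.
  by rewrite ffunE.
by move=> m /negbTE Hm; rewrite ffunE Hm mul0r.
Qed.

Fixpoint FF n (i j : 'I_n) (phi psi : Vsp n) (cs : nat -> nat) (k : nat) : Sym n k :=
  match k with
  | 0 => one n
  | k'.+1 => lin2 i j ((cs k')%:R * phi j + psi j) ((cs k')%:R * phi i + psi i)
                  (FF i j phi psi cs k')
  end.

Lemma prod_recr (F : nat -> CC) k :
  \prod_(i < k.+1) F i = (\prod_(i < k) F i) * F k.
Proof. exact: big_ord_recr. Qed.

Lemma ev_FF n (i j : 'I_n) phi psi cs k b :
  ev (pt phi psi b) (FF i j phi psi cs k)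
  = \prod_(k' < k) ((b%:R - (cs k')%:R) * (phi i * psi j - phi j * psi i)).
Proof.
elim: k => [|k IH]; first by rewrite big_ord0 ev_one.
rewrite (prod_recr (fun k0 => (b%:R - (cs k0)%:R) * (phi i * psi j - phi j * psi i))).
change (FF i j phi psi cs k.+1) with (lin2 i j ((cs k)%:R * phi j + psi j) ((cs k)%:R * phi i + psi i) (FF i j phi psi cs k)).
rewrite ev_lin2 IH !ffunE.
set P := \prod_(_ < _) _.
ring.
Qed.

Lemma lf_multmap n q x : linfun (@multmap n q) x = multmap x.
Proof. exact: lfunE. Qed.
Lemma lf_koszul n q x : linfun (@koszul n q) x = koszul x.
Proof. exact: lfunE. Qed.
Lemma lf_Lmap n q phi psi x : linfun (@Lmap n q phi psi) x = Lmap phi psi x.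
Proof. exact: lfunE. Qed.

Lemma eqr_natC (m k : nat) : ((m%:R : CC) == k%:R) = (m == k).
Proof. exact: (@eqr_nat (Rdefinitions.R)[i]). Qed.

Lemma scale_natb (c : CC) (bb : bool) : c *: (bb%:R : CC^o) = if bb then c else 0.
Proof. by case: bb; rewrite /= ?mulr1n ?mulr0n; [exact: (mulr1 (c : CC)) | exact: (mulr0 (c : CC))]. Qed.

Theorem lemma3p3 (n : nat) (K : {vspace Wedge2 n}) :
  (\dim K + 3 = 2 * n)%N ->
  perp_meets_Gr K ->
  forall q : nat, (q.+1 <= dimW q K)%N.
Proof.
move=> _ [w [Hperp [Hw0 [phi [psi Hw]]]]] q.
have [p0 Hp0] : exists p0, w p0 != 0.
  case: (pickP (fun p => w p != 0)) => [p0 Hp0|H]; first by exists p0.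
  case/negP: Hw0; apply/eqP/ffunP => p; rewrite ffunE; exact/eqP/negbFE/H.
pose i := (val p0).1; pose j := (val p0).2.
pose w0 := phi i * psi j - phi j * psi i.
have Hw0' : w0 != 0 by move: Hp0; rewrite Hw ffunE.
pose Lf := linfun (@Lmap n q phi psi).
have Him : (Wim q K <= Wker n q :&: lker Lf)%VS.
  rewrite /Wim /tensK limg_span; apply/span_subvP => x /mapP [t /allpairsP [[k g] [Hk _ ->]] ->].
  rewrite memv_cap !memv_ker !lf_multmap lf_koszul lf_Lmap multmap_koszul eqxx andTb.
  apply/eqP/ffunP => b; rewrite L_koszul [RHS]ffunE -Hw.
  have := Hperp k (vbasis_mem Hk); rewrite /pairing => Hpk.
  rewrite (eq_bigr (fun p => (w p * k p) * ev (pt phi psi b) g)); last first.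
    by move=> p _; rewrite ffunE evZ mulrA.
  by rewrite -mulr_suml Hpk mul0r oppr0.
pose delta (a : 'I_q.+1) := [ffun b : 'I_q.+1 => ((b == a)%:R : CC^o)].
have Hdel : forall a, delta a \in (Lf @: Wker n q)%VS.
  move=> a.
  pose cs := fun k : nat => if (k < a)%N then k else k.+1.
  pose F := FF i j phi psi cs q.
  pose dp := [ffun p : pairs n => ((p == p0)%:R : CC^o)] : Wedge2 n.
  pose z := koszul (tens2 dp F).
  have Hz : z \in Wker n q by rewrite memv_ker lf_multmap multmap_koszul.
  pose g := - w0 * \prod_(k' < q) (((a : nat)%:R - (cs k')%:R) * w0).
  have Hg : g != 0.
    rewrite mulf_neq0 ?oppr_eq0 //; apply/prodf_neq0 => k' _.
    rewrite mulf_neq0 // subr_eq0 eqr_natC /cs; case: ifP => Hk.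
      by rewrite eq_sym (ltn_eqF Hk).
    by apply/eqP => Ha; rewrite Ha ltnSn in Hk.
  have HLz : Lf z = g *: delta a.
    apply/ffunP => b; rewrite lf_Lmap L_koszul [RHS]ffunE [delta a b]ffunE.
    under eq_bigr => p _ do rewrite [tens2 _ _ p]ffunE evZ [dp p]ffunE.
    rewrite sum_delta2 ev_FF [wedge2 _ _ p0]ffunE.
    rewrite scale_natb; case: (b =P a) => [->|/eqP Hba]; first by rewrite /g mulNr.
    apply/eqP; rewrite oppr_eq0 mulf_eq0; apply/orP; right.
    apply/prodf_eq0.
    have Hba' : (b : nat) != a := Hba.
    have [k0 Hk0] : exists k0 : 'I_q, cs k0 = b.
      case: (ltnP b a) => Hb.
        have Hbq : (b < q)%N by have := ltn_ord a; lia.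
        by exists (Ordinal Hbq); rewrite /cs /= Hb.
      have Hbq : (b.-1 < q)%N by have := ltn_ord b; lia.
      exists (Ordinal Hbq); rewrite /cs /=.
      have -> : (b.-1 < a)%N = false by lia.
      lia.
    by exists k0 => //; rewrite Hk0 subrr mul0r.
  have -> : delta a = Lf (g^-1 *: z) by rewrite linearZ /= HLz scalerA mulVf // scale1r.
  by apply: memv_img; rewrite memvZ.
have Hfull : (fullv <= Lf @: Wker n q)%VS.
  apply/subvP => v _.
  have -> : v = \sum_a v a *: delta a.
    apply/ffunP => b; rewrite sum_ffunE (bigD1 b) // big1 ?Monoid.mulm1.
      by rewrite !ffunE eqxx scale_natb.
    by move=> a Ha; rewrite !ffunE eq_sym (negbTE Ha) scale_natb.
  by apply: memv_suml => a _; apply: memvZ; exact: Hdel.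
have Hdim := limg_ker_dim Lf (Wker n q).
have H1 := dimvS Him. have H2 := dimvS Hfull.
rewrite dimvf /dim /= card_ord muln1 in H2.
by rewrite /dimW -Hdim ltn_subRL -addnS leq_add.
Qed.
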